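(* Let $k\ge 1$ and let $T_{2,k}$ be the balanced binary tree of depth $k$, i.e. the rooted tree with $2^{k}-1$ vertices in which the root and every vertex at distance at most $k-2$ from the root has exactly two children, and all leaves are at distance $k-1$ from the root. Then \[ \pi_{leaf}(T_{2,k})=\pi(T_{2,k})=\frac{2^{k}+(-1)^{k-1}}{3}, \] the $(k-1)$-th Jacobsthal number.
   Context: Let $G$ be a finite simple undirected graph. For $S\subseteq V(G)$, the propagation process starting from $S$ is as follows: set $P(0)=S$; at each step one may add to the current set $P$ a vertex $w\notin P$ provided there is a vertex $v\in P$ adjacent to $w$ such that every neighbour of $v$ other than $w$ already lies in $P$ (i.e. $w$ is the unique neighbour of $v$ outside $P$). We say $S$ propagates in $G$ if, by repeated application of this rule, the current set can eventually become all of $V(G)$. $\pi(G)$ denotes the minimum cardinality of a set $S\subseteq V(G)$ that propagates in $G$. For a tree $T$, $\pi_{leaf}(T)$ denotes the minimum cardinality of a set consisting only of leaves (vertices of degree one) of $T$ that propagates in $T$. *)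

(* Defs.v *)
From Stdlib Require Import Relation_Operators.
From mathcomp Require Import all_boot all_order all_algebra.
Set Implicit Arguments. Unset Strict Implicit. Unset Printing Implicit Defensive.

Definition simple_graph (V : finType) (e : rel V) : Prop :=
  symmetric e /\ irreflexive e.

Definition force_step (V : finType) (e : rel V) (P Q : {set V}) : Prop :=
  exists v w, [/\ v \in P, w \notin P, e v w,
                  (forall u, e v u -> u != w -> u \in P) & Q = w |: P].

Definition propagates (V : finType) (e : rel V) (S : {set V}) : Prop :=
  clos_refl_trans {set V} (@force_step V e) S [set: V].

Definition degree (V : finType) (e : rel V) (v : V) : nat := #|[set u | e v u]|.

(* Leaf = vertex of degree one.  Convention: in the one-vertex tree the unique
   vertex is also regarded as a leaf. *)
Definition is_leaf (V : finType) (e : rel V) (v : V) : bool :=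
  (degree e v == 1) || (#|V| == 1).

Definition pi_is (V : finType) (e : rel V) (n : nat) : Prop :=
  (exists S : {set V}, propagates e S /\ #|S| = n) /\
  (forall S : {set V}, propagates e S -> n <= #|S|).

Definition pi_leaf_is (V : finType) (e : rel V) (n : nat) : Prop :=
  (exists S : {set V}, {subset S <= is_leaf e} /\ propagates e S /\ #|S| = n) /\
  (forall S : {set V}, {subset S <= is_leaf e} -> propagates e S -> n <= #|S|).

(* Balanced binary tree T_{2,k}: vertices 0 .. 2^k - 2 (heap numbering),
   vertex i has children 2i+1 and 2i+2 (when present). *)
Definition btree_V (k : nat) := 'I_(2 ^ k).-1.

Definition btree_adj (k : nat) : rel (btree_V k) :=
  fun i j => [|| val j == (val i).*2.+1, val j == (val i).*2.+2,
                 val i == (val j).*2.+1 | val i == (val j).*2.+2].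

Definition jacobsthal_formula (k : nat) : nat :=
  `|(((2 : int) ^+ k + (-1) ^+ (k - 1)) %/ 3)%Z|%N.

(* Main.v *)
Require Import Defs.
From mathcomp Require Import all_boot all_order all_algebra.
From Stdlib Require Import Relation_Operators.
From mathcomp Require Import zify.
Set Implicit Arguments. Unset Strict Implicit. Unset Printing Implicit Defensive.

Definition crt (V : finType) (e : rel V) := clos_refl_trans {set V} (@force_step V e).

Lemma crt_mono (V : finType) (e : rel V) (P Q : {set V}) :
  crt e P Q -> forall P' : {set V}, P \subset P' -> exists Q' : {set V}, (Q :|: P') \subset Q' /\ crt e P' Q'.
Proof.
move=> H; elim: H => [P0 Q0 [v [w [vP wP evw Hu ->]]]|P0| P0 Q0 R _ IH1 _ IH2] P' sPP'.
- case wP': (w \in P').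
  + exists P'; split; last exact: rt_refl.
    by apply/subsetP=> x; rewrite !inE; case/orP=> [/orP[/eqP->//|/(subsetP sPP')]|].
  + exists (w |: P'); split; last first.
      apply: rt_step; exists v, w; split; rewrite ?wP' //.
      * exact: (subsetP sPP').
      * by move=> u euv uw; apply: (subsetP sPP'); apply: Hu.
    by apply/subsetP=> x; rewrite !inE; case/orP=> [/orP[->//|/(subsetP sPP')->]|->]; rewrite orbT.
- by exists P'; split; [rewrite subUset sPP' subxx|exact: rt_refl].
- have [Q1 [sQ1 c1]] := IH1 _ sPP'.
  have [Q2 [sQ2 c2]] := IH2 Q1 (subset_trans (subsetUl _ _) sQ1).
  exists Q2; split; last exact: rt_trans c1 c2.
  apply/subsetP=> x; rewrite inE; case/orP=> Hx; apply: (subsetP sQ2); rewrite inE ?Hx //.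
  by rewrite (subsetP sQ1) ?orbT // inE Hx orbT.
Qed.

Definition reach (V : finType) (e : rel V) (A B : {set V}) :=
  exists Q : {set V}, B \subset Q /\ crt e A Q.

Lemma reach_trans (V : finType) (e : rel V) (A B C : {set V}) :
  reach e A B -> reach e B C -> reach e A C.
Proof.
move=> [Q1 [s1 c1]] [Q2 [s2 c2]].
have [Q3 [s3 c3]] := crt_mono c2 s1.
exists Q3; split; last exact: rt_trans c1 c3.
exact: subset_trans s2 (subset_trans (subsetUl _ _) s3).
Qed.

Lemma reach_refl (V : finType) (e : rel V) (A B : {set V}) : B \subset A -> reach e A B.
Proof. by move=> s; exists A; split=> //; exact: rt_refl. Qed.

Lemma reach_add (V : finType) (e : rel V) (A B C : {set V}) :
  reach e B C -> B \subset A -> reach e A (A :|: C).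
Proof.
move=> [Q [s c]] sBA.
have [Q' [s' c']] := crt_mono c sBA.
exists Q'; split=> //; apply: subset_trans s'.
by rewrite setUC; apply: setSU.
Qed.

Lemma reach_step (V : finType) (e : rel V) (A : {set V}) v w :
  v \in A -> e v w -> (forall u, e v u -> u != w -> u \in A) -> reach e A (w |: A).
Proof.
move=> vA evw H; case wA: (w \in A).
  by apply: reach_refl; apply/subsetP=> x; rewrite !inE => /orP[/eqP->|].
exists (w |: A); split=> //; apply: rt_step; exists v, w; split; rewrite ?wA //.
Qed.

Definition clo (V : finType) (e : rel V) (P : {set V}) := [set v | [forall u, e v u ==> (u \in P)]].

Lemma crt_count (V : finType) (e : rel V) (Z : {set V}) :
  (forall x y, e x y -> (x \in Z) || (y \in Z)) ->
  forall P Q, crt e P Q ->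
  #|Q| + (#|Z :&: P| + #|Z :&: clo e P|) <= #|P| + (#|Z :&: Q| + #|Z :&: clo e Q|).
Proof.
move=> Zc P0 Q0; elim=> {P0 Q0} [P Q [v [w [vP wP evw Hu ->]]]|P| P Q R _ IH1 _ IH2].
- have sP : P \subset w |: P by apply/subsetP=> x xP; rewrite inE xP orbT.
  have sI : Z :&: P \subset Z :&: (w |: P) by apply: setIS.
  have sC : Z :&: clo e P \subset Z :&: clo e (w |: P).
    apply: setIS; apply/subsetP=> x; rewrite !inE => /forallP H.
    by apply/forallP=> u; apply/implyP=> /(implyP (H u)) uP; rewrite !inE uP orbT.
  rewrite cardsU1 wP add1n.
  case/orP: (Zc v w evw) => Hz.
  + have: Z :&: clo e P \proper Z :&: clo e (w |: P).
      rewrite properE sC /=; apply/subsetPn; exists v.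
      * rewrite !inE Hz /=; apply/forallP=> u; apply/implyP=> evu.
        by rewrite !inE; case: (eqVneq u w)=> [->|/(Hu u evu) ->]; rewrite ?eqxx ?orbT.
      * rewrite !inE Hz /=; apply/negP=> /forallP /(_ w); by rewrite evw (negbTE wP).
    move/proper_card=> H1; have H2 := subset_leq_card sI; lia.
  + have: Z :&: P \proper Z :&: (w |: P).
      by rewrite properE sI /=; apply/subsetPn; exists w; rewrite !inE ?eqxx ?Hz ?(negbTE wP).
    move/proper_card=> H1; have H2 := subset_leq_card sC; lia.
- lia.
- lia.
Qed.

Lemma prop_lower (V : finType) (e : rel V) (Z S : {set V}) :
  (forall x y, e x y -> (x \in Z) || (y \in Z)) ->
  propagates e S -> #|V| <= #|S| + 2 * #|Z|.
Proof.
move=> Zc pS; have := crt_count Zc pS.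
rewrite cardsT.
have := subset_leq_card (subsetIl Z [set: V]).
have := subset_leq_card (subsetIl Z (clo e [set: V])).
lia.
Qed.

Definition pu (A B : pred nat) : pred nat := fun j => A j || B j.
Definition p1 (i : nat) : pred nat := fun j => j == i.
Definition pp (i : nat) : pred nat := fun j => (0 < i) && (j == (i - 1) %/ 2).
Definition adjn (i u : nat) : bool :=
  [|| u == i.*2.+1, u == i.*2.+2, i == u.*2.+1 | i == u.*2.+2].

Definition NS K (A : pred nat) : {set btree_V K} := [set x | A (val x)].
Definition R K (A B : pred nat) := reach (@btree_adj K) (NS K A) (NS K B).

Lemma puE (A B : pred nat) j : pu A B j = A j || B j. Proof. by []. Qed.
Lemma p1E i j : p1 i j = (j == i). Proof. by []. Qed.

Lemma NS_pu K A B : NS K (pu A B) = NS K A :|: NS K B.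
Proof. by apply/setP=> x; rewrite !inE. Qed.

Lemma R_refl K (A B : pred nat) : (forall j, B j -> A j) -> R K A B.
Proof. by move=> H; apply: reach_refl; apply/subsetP=> x; rewrite !inE => /H. Qed.

Lemma R_trans K (A B C : pred nat) : R K A B -> R K B C -> R K A C.
Proof. exact: reach_trans. Qed.

Lemma R_add K (A B C : pred nat) : R K B C -> (forall j, B j -> A j) -> R K A (pu A C).
Proof.
move=> H s; rewrite /R NS_pu; apply: reach_add H _.
by apply/subsetP=> x; rewrite !inE => /s.
Qed.

Lemma R_stepN K (A : pred nat) i w : i < (2 ^ K).-1 -> w < (2 ^ K).-1 -> A i -> adjn i w ->
  (forall u, u < (2 ^ K).-1 -> adjn i u -> u != w -> A u) -> R K A (pu A (p1 w)).
Proof.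
move=> Hi Hw Ai aiw H; rewrite /R.
have -> : NS K (pu A (p1 w)) = Ordinal Hw |: NS K A.
  by apply/setP=> x; rewrite !inE /pu /p1 orbC -val_eqE.
apply: (@reach_step _ _ _ (Ordinal Hi)); first by rewrite inE.
  exact: aiw.
move=> u euv uw; rewrite inE; apply: H; [exact: ltn_ord|exact: euv|].
by rewrite -val_eqE in uw.
Qed.

Lemma R_up K (A : pred nat) i : i < (2 ^ K).-1 -> A i ->
  (forall u, u < (2 ^ K).-1 -> adjn i u -> ~~ pp i u -> A u) -> R K A (pu A (pp i)).
Proof.
move=> Hi Ai H; case: (posnP i) => [i0|ipos].
  by apply: R_refl => j; rewrite /pu /pp i0 /= orbF.
apply: (@R_trans _ _ (pu A (p1 ((i - 1) %/ 2)))).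
  apply: (@R_stepN K A i) => //; first lia.
    rewrite /adjn; lia.
  move=> u un au uw; apply: H => //; rewrite /pp; lia.
apply: R_refl => j; rewrite /pu /pp /p1; case/orP=> [->//|/andP[_ ->]]; by rewrite orbT.
Qed.

Lemma R_down K (A : pred nat) i : i.*2.+2 < (2 ^ K).-1 -> A i -> (forall u, pp i u -> A u) ->
  A i.*2.+1 -> R K A (pu A (p1 i.*2.+2)).
Proof.
move=> Hc Ai Hp Ac; apply: (@R_stepN K A i) => //; first lia.
  by rewrite /adjn eqxx orbT.
move=> u _ au uw; have : (u == i.*2.+1) || pp i u by move: au uw; rewrite /adjn /pp; lia.
by case/orP=> [/eqP->|/Hp].
Qed.

Lemma pp_c1 i j : pp i.*2.+1 j = (j == i).
Proof. rewrite /pp; apply/idP/idP => H; lia. Qed.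
Lemma pp_c2 i j : pp i.*2.+2 j = (j == i).
Proof. rewrite /pp; apply/idP/idP => H; lia. Qed.

Fixpoint Tr (f : nat -> bool) (h i : nat) {struct h} : pred nat :=
  match h with
  | 0 => fun _ => false
  | h'.+1 => fun j => [|| f h && (j == i), Tr f h' i.*2.+1 j | Tr f h' i.*2.+2 j]
  end.

Definition sub := Tr (fun _ => true).

Lemma sub_S h i j : sub h.+1 i j = [|| j == i, sub h i.*2.+1 j | sub h i.*2.+2 j].
Proof. by []. Qed.
Lemma sub_root h i : 0 < h -> sub h i i.
Proof. by case: h => // h _; rewrite sub_S eqxx. Qed.

Fixpoint sel (h t i : nat) {struct h} : pred nat :=
  match h with
  | 0 => fun _ => false
  | h'.+1 => if h' is 0 then (if t == 2 then (fun _ => false) else p1 i)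
             else match t with
                  | 0 => pu (sel h' 0 i.*2.+1) (sel h' 1 i.*2.+2)
                  | 1 => pu (sel h' 0 i.*2.+1) (sel h' 2 i.*2.+2)
                  | _ => pu (sel h' 1 i.*2.+1) (sel h' 2 i.*2.+2)
                  end
  end.

Ltac bt := let j := fresh "j" in let H := fresh "H" in
  move=> j H; rewrite ?puE ?p1E ?pp_c1 ?pp_c2 ?sub_S in H *;
  repeat (case/orP: H => H); first [by rewrite ?H ?orbT ?orTb ?sub_root | by move: H => /=].

Lemma props K : forall h d i, 0 < h -> d + h = K -> 2 ^ d <= i.+1 -> i.+1 < 2 ^ d.+1 ->
  [/\ R K (sel h 0 i) (pu (sub h i) (pp i)),
      R K (sel h 1 i) (p1 i),
      R K (pu (sel h 1 i) (pp i)) (sub h i) &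
      R K (pu (pu (sel h 2 i) (p1 i)) (pp i)) (sub h i)].
Proof.
elim=> // h IH d i _ dh Hd1 Hd2.
have e2 : 2 ^ d.+1 = 2 * 2 ^ d by rewrite expnS.
have dK : 2 ^ d.+1 <= 2 ^ K by rewrite leq_pexp2l //; lia.
have Hi : i < (2 ^ K).-1 by lia.
case: h IH dh => [_ dh|h IH dh].
  have eK : 2 ^ K = 2 * 2 ^ d by rewrite -e2; congr (_ ^ _); lia.
  have -> : sel 1 0 i = p1 i by [].
  have -> : sel 1 1 i = p1 i by [].
  have -> : sel 1 2 i = (fun _ => false) by [].
  split.
  - apply: (R_trans (R_up Hi _ _)); first by rewrite /p1.
      move=> u un; rewrite /adjn /pp; lia.
    by apply: R_refl; bt.
  - by apply: R_refl; bt.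
  - by apply: R_refl; bt.
  - by apply: R_refl; bt.
have e3 : 2 ^ d.+2 = 2 * 2 ^ d.+1 by rewrite expnS.
have dK2 : 2 ^ d.+2 <= 2 ^ K by rewrite leq_pexp2l //; lia.
have Hc2 : i.*2.+2 < (2 ^ K).-1 by lia.
have [U1 M1a M1b D1] := IH d.+1 i.*2.+1 isT ltac:(lia) ltac:(lia) ltac:(lia).
have [U2 M2a M2b D2] := IH d.+1 i.*2.+2 isT ltac:(lia) ltac:(lia) ltac:(lia).
have nb : forall u, adjn i u -> ~~ pp i u -> (u == i.*2.+1) || (u == i.*2.+2).
  by move=> u; rewrite /adjn /pp; lia.
have r1 := sub_root i.*2.+1 (isT : 0 < h.+1).
have r2 := sub_root i.*2.+2 (isT : 0 < h.+1).
split.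
- have -> : sel h.+2 0 i = pu (sel h.+1 0 i.*2.+1) (sel h.+1 1 i.*2.+2) by [].
  eapply R_trans; first by apply: (R_add U1); bt.
  eapply R_trans; first by apply: (R_add M2a); bt.
  eapply R_trans.
    apply: (@R_up K _ i) => //; first by rewrite !puE pp_c1 eqxx !orbT.
    by move=> u _ au npu; case/orP: (nb u au npu) => /eqP->; rewrite !puE ?p1E ?r1 ?eqxx !orbT.
  eapply R_trans; first by apply: (R_add M2b); bt.
  by apply: R_refl; bt.
- have -> : sel h.+2 1 i = pu (sel h.+1 0 i.*2.+1) (sel h.+1 2 i.*2.+2) by [].
  eapply R_trans; first by apply: (R_add U1); bt.
  by apply: R_refl; bt.
- have -> : sel h.+2 1 i = pu (sel h.+1 0 i.*2.+1) (sel h.+1 2 i.*2.+2) by [].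
  eapply R_trans; first by apply: (R_add U1); bt.
  eapply R_trans.
    apply: (@R_down K _ i) => //; first by rewrite !puE pp_c1 eqxx !orbT.
      by move=> u pu; rewrite !puE pu !orbT.
    by rewrite !puE r1 !orbT.
  eapply R_trans; first by apply: (R_add D2); bt.
  by apply: R_refl; bt.
- have -> : sel h.+2 2 i = pu (sel h.+1 1 i.*2.+1) (sel h.+1 2 i.*2.+2) by [].
  eapply R_trans; first by apply: (R_add M1a); bt.
  eapply R_trans.
    apply: (@R_down K _ i) => //; first by rewrite !puE ?p1E eqxx !orbT.
      by move=> u pu; rewrite !puE pu !orbT.
    by rewrite !puE ?p1E eqxx !orbT.
  eapply R_trans; first by apply: (R_add M1b); bt.
  eapply R_trans; first by apply: (R_add D2); bt.
  by apply: R_refl; bt.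
Qed.

Lemma sel_leaf K : forall h d i t j, 0 < h -> d + h = K -> 2 ^ d <= i.+1 -> i.+1 < 2 ^ d.+1 ->
  sel h t i j -> 2 ^ K <= (j.+1).*2 /\ j.+1 < 2 ^ K.
Proof.
elim=> // h IH d i t j _ dh Hd1 Hd2.
have e2 : 2 ^ d.+1 = 2 * 2 ^ d by rewrite expnS.
case: h IH dh => [_ dh|h IH dh].
  have eK : 2 ^ K = 2 * 2 ^ d by rewrite -e2; congr (_ ^ _); lia.
  rewrite /=; case: (t == 2) => //; rewrite p1E => /eqP ->; lia.
have Hc : forall c, (c = i.*2.+1) \/ (c = i.*2.+2) -> forall t', sel h.+1 t' c j ->
    2 ^ K <= (j.+1).*2 /\ j.+1 < 2 ^ K.
  have e3 : 2 ^ d.+2 = 2 * 2 ^ d.+1 by rewrite expnS.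
  move=> c Hc t'; apply: (IH d.+1) => //; lia.
have c1 : i.*2.+1 = i.*2.+1 \/ i.*2.+1 = i.*2.+2 by left.
have c2 : i.*2.+2 = i.*2.+1 \/ i.*2.+2 = i.*2.+2 by right.
case: t => [|[|t]].
- rewrite (_ : sel h.+2 0 i = pu (sel h.+1 0 i.*2.+1) (sel h.+1 1 i.*2.+2)) // puE => /orP[] Hs; [exact: Hc c1 _ Hs|exact: Hc c2 _ Hs].
- rewrite (_ : sel h.+2 1 i = pu (sel h.+1 0 i.*2.+1) (sel h.+1 2 i.*2.+2)) // puE => /orP[] Hs; [exact: Hc c1 _ Hs|exact: Hc c2 _ Hs].
- rewrite (_ : sel h.+2 t.+2 i = pu (sel h.+1 1 i.*2.+1) (sel h.+1 2 i.*2.+2)) // puE => /orP[] Hs; [exact: Hc c1 _ Hs|exact: Hc c2 _ Hs].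
Qed.

Lemma adjE K (x u : btree_V K) : btree_adj x u = adjn (nat_of_ord x) (nat_of_ord u).
Proof. by []. Qed.

Lemma is_leafP K (x : btree_V K) : 2 ^ K <= (nat_of_ord x).+1.*2 -> is_leaf (@btree_adj K) x.
Proof.
move=> H; have xn : nat_of_ord x < (2 ^ K).-1 := ltn_ord x.
case: (posnP (nat_of_ord x)) => [x0|xpos].
  apply/orP; right; rewrite card_ord.
  have : 2 ^ K <= 2 by move: H; rewrite x0.
  have : 0 < 2 ^ K by rewrite expn_gt0.
  lia.
have pn : (nat_of_ord x - 1) %/ 2 < (2 ^ K).-1 by lia.
apply/orP; left; rewrite /degree.
have -> : [set u | btree_adj x u] = [set Ordinal pn].
  apply/setP=> u; rewrite !inE adjE -val_eqE /=.
  have un : nat_of_ord u < (2 ^ K).-1 := ltn_ord u.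
  rewrite /adjn; apply/idP/idP; lia.
by rewrite cards1.
Qed.

Lemma NS_ext K (A B : pred nat) : (forall j, A j = B j) -> NS K A = NS K B.
Proof. by move=> H; apply/setP=> x; rewrite !inE H. Qed.

Lemma card_pu K A B : #|NS K (pu A B)| <= #|NS K A| + #|NS K B|.
Proof. by rewrite NS_pu cardsU leq_subr. Qed.

Lemma card_p1 K i : #|NS K (p1 i)| <= 1.
Proof.
apply/card_le1_eqP => x y; rewrite !inE !p1E => /eqP hx /eqP hy.
by apply: val_inj; rewrite hx hy.
Qed.

Lemma card_0 K : #|NS K (fun _ => false)| = 0.
Proof. by apply/eqP; rewrite cards_eq0; apply/eqP/setP=> x; rewrite !inE. Qed.

Fixpoint cnt (h t : nat) {struct h} : nat :=
  match h with
  | 0 => 0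
  | h'.+1 => if h' is 0 then (if t == 2 then 0 else 1)
             else match t with
                  | 0 => cnt h' 0 + cnt h' 1
                  | 1 => cnt h' 0 + cnt h' 2
                  | _ => cnt h' 1 + cnt h' 2
                  end
  end.

Lemma card_sel K h : forall t i, #|NS K (sel h t i)| <= cnt h t.
Proof.
elim: h => [|h IH] t i; first by rewrite card_0.
case: h IH => [|h] IH.
  by rewrite /=; case: (t == 2); rewrite ?card_0 ?card_p1.
case: t => [|[|t]].
- rewrite (_ : sel h.+2 0 i = pu (sel h.+1 0 i.*2.+1) (sel h.+1 1 i.*2.+2)) //.
  by apply: leq_trans (@card_pu K _ _) _; apply: leq_add; apply: IH.
- rewrite (_ : sel h.+2 1 i = pu (sel h.+1 0 i.*2.+1) (sel h.+1 2 i.*2.+2)) //.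
  by apply: leq_trans (@card_pu K _ _) _; apply: leq_add; apply: IH.
- rewrite (_ : sel h.+2 t.+2 i = pu (sel h.+1 1 i.*2.+1) (sel h.+1 2 i.*2.+2)) //.
  by apply: leq_trans (@card_pu K _ _) _; apply: leq_add; apply: IH.
Qed.

Fixpoint tc (f : nat -> bool) (h : nat) : nat :=
  match h with 0 => 0 | h'.+1 => (if f h'.+1 then 1 else 0) + 2 * tc f h' end.

Lemma card_Tr K f h : forall i, #|NS K (Tr f h i)| <= tc f h.
Proof.
elim: h => [|h IH] i; first by rewrite card_0.
rewrite (_ : NS K (Tr f h.+1 i) = NS K (pu (fun j => f h.+1 && (j == i)) (pu (Tr f h i.*2.+1) (Tr f h i.*2.+2)))); last by apply: NS_ext.
apply: leq_trans (@card_pu K _ _) _; rewrite (_ : tc f h.+1 = (if f h.+1 then 1 else 0) + 2 * tc f h) //.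
apply: leq_add.
  case: (f h.+1); last by rewrite card_0.
  by rewrite (@NS_ext K _ (p1 i)) ?card_p1.
apply: leq_trans (@card_pu K _ _) _; rewrite mul2n -(addnn (tc f h)); apply: leq_add; apply: IH.
Qed.

Lemma Tr_in (f : nat -> bool) : forall h i t r, t < h -> r < 2 ^ t -> f (h - t) -> Tr f h i ((i.+1) * 2 ^ t + r).-1.
Proof.
elim=> // h IH i [|t] r th rt ft.
  have -> : r = 0 by lia.
  by rewrite /= subn0 in ft *; rewrite ft muln1 addn0 /= eqxx.
rewrite expnS in rt *.
rewrite /=; apply/orP; right.
case: (ltnP r (2 ^ t)) => rlt.
  apply/orP; left.
  have -> : i.+1 * (2 * 2 ^ t) + r = (i.*2.+1).+1 * 2 ^ t + r.
    by rewrite mulnA -mul2n; congr (_ * _ + _); lia.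
  by apply: IH => //; lia.
apply/orP; right.
have -> : i.+1 * (2 * 2 ^ t) + r = (i.*2.+2).+1 * 2 ^ t + (r - 2 ^ t).
  rewrite mulnA (_ : (i.*2.+2).+1 = (i.+1 * 2).+1); last by lia.
  rewrite mulSn; lia.
by apply: IH => //; lia.
Qed.

Lemma depth_ex j : exists d, 2 ^ d <= j.+1 < 2 ^ d.+1.
Proof. by exists (trunc_log 2 j.+1); apply: trunc_log_bounds. Qed.

Lemma Tr_at (f : nat -> bool) K j d : j.+1 < 2 ^ K -> 2 ^ d <= j.+1 -> j.+1 < 2 ^ d.+1 -> f (K - d) -> Tr f K 0 j.
Proof.
move=> jK d1 d2 fd.
have dK : d < K by rewrite -(@ltn_exp2l 2) //; lia.
have := @Tr_in f K 0 d (j.+1 - 2 ^ d) dK ltac:(rewrite expnS in d2; lia) fd.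
by rewrite mul1n (_ : (2 ^ d + (j.+1 - 2 ^ d)).-1 = j) //; lia.
Qed.

Definition zf (h : nat) : bool := (h %% 2 == 0) && (1 < h).

Lemma cover_child K a b : b < (2 ^ K).-1 -> (b == a.*2.+1) || (b == a.*2.+2) ->
  Tr zf K 0 a || Tr zf K 0 b.
Proof.
move=> bn ab; have [d /andP[d1 d2]] := depth_ex a.
have e2 : 2 ^ d.+1 = 2 * 2 ^ d by rewrite expnS.
have e3 : 2 ^ d.+2 = 2 * 2 ^ d.+1 by rewrite expnS.
have b1 : 2 ^ d.+1 <= b.+1 by lia.
have b2 : b.+1 < 2 ^ d.+2 by lia.
have K0 : 0 < 2 ^ K by rewrite expn_gt0.
have dK : d.+1 < K by rewrite -(@ltn_exp2l 2) //; lia.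
case H: ((K - d) %% 2 == 0).
  apply/orP; left; apply: (@Tr_at _ _ _ d) => //; try lia.
  by rewrite /zf H; lia.
apply/orP; right; apply: (@Tr_at _ _ _ d.+1) => //; try lia.
rewrite /zf; move: H; lia.
Qed.

Lemma cnt_rel h : 0 < h ->
  (h %% 2 = 1 -> [/\ 3 * cnt h 1 = 2 ^ h + 1, cnt h 0 = cnt h 1 & cnt h 2 + 1 = cnt h 1]) /\
  (h %% 2 = 0 -> [/\ 3 * cnt h 1 + 1 = 2 ^ h, cnt h 0 = cnt h 1 + 1 & cnt h 2 = cnt h 1]).
Proof.
elim: h => // h IH _.
case: h IH => [|h] IH; first by split=> // _; split.
have [IH1 IH2] := IH isT.
have -> : cnt h.+2 0 = cnt h.+1 0 + cnt h.+1 1 by [].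
have -> : cnt h.+2 1 = cnt h.+1 0 + cnt h.+1 2 by [].
have -> : cnt h.+2 2 = cnt h.+1 1 + cnt h.+1 2 by [].
rewrite (expnS 2 h.+1).
have [H|H] : h.+1 %% 2 = 0 \/ h.+1 %% 2 = 1 by lia.
  have [a b c] := IH2 H; split=> H'; [split; lia|lia].
have [a b c] := IH1 H; split=> H'; [lia|split; lia].
Qed.

Lemma tc_rel h : 0 < h -> 2 * tc zf h + cnt h 1 + 1 = 2 ^ h.
Proof.
elim: h => // h IH _.
case: h IH => [|h] IH; first by [].
have := IH isT.
have -> : tc zf h.+2 = (if zf h.+2 then 1 else 0) + 2 * tc zf h.+1 by [].
have -> : cnt h.+2 1 = cnt h.+1 0 + cnt h.+1 2 by [].
have [R1 R2] := cnt_rel (isT : 0 < h.+1).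
rewrite (expnS 2 h.+1).
case Z: (zf h.+2); move: Z; rewrite /zf => Z.
  have [H|H] : h.+1 %% 2 = 0 \/ h.+1 %% 2 = 1 by lia.
    by lia.
  have [a b c] := R1 H; lia.
have [H|H] : h.+1 %% 2 = 0 \/ h.+1 %% 2 = 1 by lia.
  have [a b c] := R2 H; lia.
by lia.
Qed.

Import GRing.Theory Num.Theory.

Lemma jacE k : 0 < k -> jacobsthal_formula k = cnt k 1.
Proof.
move=> k0; have [R1 R2] := cnt_rel k0; rewrite /jacobsthal_formula.
have [H|H] : k %% 2 = 0 \/ k %% 2 = 1 by lia.
  have [a _ _] := R2 H.
  have Ho : odd (k - 1) = true by have := modn2 (k - 1); case: (odd (k - 1)) => //= ?; lia.
  rewrite -signr_odd Ho expr1.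
  have -> : ((2:int) ^+ k + -1 = ((2 ^ k - 1)%N)%:R)%R by rewrite natrB ?expn_gt0 // natrX.
  have -> : (2 ^ k - 1 = 3 * cnt k 1)%N by lia.
  by rewrite natrM GRing.mulrC mulzK // natz.
have [a _ _] := R1 H.
have Ho : odd (k - 1) = false by have := modn2 (k - 1); case: (odd (k - 1)) => //= ?; lia.
rewrite -signr_odd Ho expr0.
have -> : ((2:int) ^+ k + 1 = ((2 ^ k + 1)%N)%:R)%R by rewrite natrD natrX.
by rewrite -a natrM GRing.mulrC mulzK // natz.
Qed.

Lemma lower k (S : {set btree_V k}) : 0 < k -> propagates (@btree_adj k) S ->
  jacobsthal_formula k <= #|S|.
Proof.
move=> k0 pS.
have cov : forall x y : btree_V k, btree_adj x y ->
    (x \in NS k (Tr zf k 0)) || (y \in NS k (Tr zf k 0)).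
  move=> x y; rewrite adjE !inE /adjn.
  have xn : nat_of_ord x < (2 ^ k).-1 := ltn_ord x.
  have yn : nat_of_ord y < (2 ^ k).-1 := ltn_ord y.
  case/orP=> [H|]; first by apply: cover_child yn _; rewrite H.
  case/orP=> [H|]; first by apply: cover_child yn _; rewrite H orbT.
  move=> H; rewrite orbC; apply: cover_child xn _; exact: H.
have H2 : (2 ^ k).-1 <= #|S| + 2 * #|NS k (Tr zf k 0)|.
  by have := prop_lower cov pS; rewrite card_ord.
have H1 : #|NS k (Tr zf k 0)| <= tc zf k := card_Tr k zf k 0.
have := tc_rel k0.
rewrite jacE //.
have : 0 < 2 ^ k by rewrite expn_gt0.
lia.
Qed.

Theorem lemma1 (k : nat) (hk : 1 <= k) :
  pi_leaf_is (@btree_adj k) (jacobsthal_formula k) /\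
  pi_is (@btree_adj k) (jacobsthal_formula k).
Proof.
have [_ _ PM2 _] := @props k k 0 0 hk (add0n k) (isT : 2 ^ 0 <= 1) (isT : 1 < 2 ^ 1).
set S0 := NS k (sel k 1 0).
have pS0 : propagates (@btree_adj k) S0.
  have : R k (sel k 1 0) (sub k 0).
    by apply: (R_trans _ PM2); apply: R_refl => j; rewrite puE /pp /= orbF.
  move=> [Q [sQ cQ]].
  suff EQ : Q = [set: btree_V k] by rewrite /propagates -EQ.
    apply/eqP; rewrite eqEsubset subsetT /=; apply: subset_trans sQ.
    apply/subsetP=> x _; rewrite inE.
    have [d /andP[d1 d2]] := depth_ex (nat_of_ord x).
    have xn : nat_of_ord x < (2 ^ k).-1 := ltn_ord x.
    apply: (@Tr_at _ k (nat_of_ord x) d) => //.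
    have : 0 < 2 ^ k by rewrite expn_gt0.
    lia.
have lS0 : {subset S0 <= is_leaf (@btree_adj k)}.
  move=> x; rewrite inE => /(@sel_leaf k k 0 0 1 _ hk (add0n k) (isT : 2 ^ 0 <= 1) (isT : 1 < 2 ^ 1)).
  by case=> H _; apply: is_leafP.
have cS0 : #|S0| = jacobsthal_formula k.
  apply/eqP; rewrite eqn_leq lower // andbT jacE //; exact: card_sel.
split; split.
- by exists S0.
- by move=> S _ pS; apply: lower.
- by exists S0.
- by move=> S pS; apply: lower.
Qed.
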